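(* Let $A$ be an alternative algebra over a field $F$ with unit element $1$, and let $d$ be a derivation with invertible values of $A$. If $x\in A$ satisfies $d(x)=0$, then either $x=0$ or $x$ is invertible.
   Context: An algebra $A$ is alternative if $(x,x,y)=0$ and $(x,y,y)=0$ for all $x,y\in A$, where $(x,y,z)=(xy)z-x(yz)$ is the associator. An element $a$ of a unital alternative algebra is invertible if there is $b$ with $ab=ba=1$; $U$ denotes the set of invertible elements of $A$. A derivation with invertible values of $A$ is a nonzero derivation $d$ of $A$ such that for every $x\in A$ either $d(x)\in U$ or $d(x)=0$. *)

(* Defs.v *)
(* Non-associative (alternative) algebras are not in MathComp,
   so we describe them explicitly: a vector space V over a field F (an lmodType F)
   equipped with a bilinear multiplication and a two-sided unit element. *)
From HB Require Import structures.
From mathcomp Require Import all_boot all_order all_algebra.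
Set Implicit Arguments. Unset Strict Implicit. Unset Printing Implicit Defensive.
Import GRing.Theory.
Local Open Scope ring_scope.

Definition bilinear_mul (F : fieldType) (V : lmodType F) (mul : V -> V -> V) : Prop :=
  (forall (a : F) (x y z : V), mul (a *: x + y) z = a *: mul x z + mul y z) /\
  (forall (a : F) (x y z : V), mul x (a *: y + z) = a *: mul x y + mul x z).

Definition associator (F : fieldType) (V : lmodType F) (mul : V -> V -> V) (x y z : V) : V :=
  mul (mul x y) z - mul x (mul y z).

Definition unital_alternative_algebra (F : fieldType) (V : lmodType F)
    (mul : V -> V -> V) (one : V) : Prop :=
  [/\ bilinear_mul mul,
      (forall x : V, mul one x = x /\ mul x one = x),
      (forall x y : V, associator mul x x y = 0) &
      (forall x y : V, associator mul x y y = 0)].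

Definition invertible (F : fieldType) (V : lmodType F) (mul : V -> V -> V) (one : V) (a : V) : Prop :=
  exists b : V, mul a b = one /\ mul b a = one.

Definition derivation (F : fieldType) (V : lmodType F) (mul : V -> V -> V) (d : V -> V) : Prop :=
  (forall (a : F) (x y : V), d (a *: x + y) = a *: d x + d y) /\
  (forall x y : V, d (mul x y) = mul (d x) y + mul x (d y)).

Definition derivation_with_invertible_values (F : fieldType) (V : lmodType F)
    (mul : V -> V -> V) (one : V) (d : V -> V) : Prop :=
  [/\ derivation mul d,
      (exists x : V, d x <> 0) &
      (forall x : V, invertible mul one (d x) \/ d x = 0)].

(* Main.v *)
Require Import Defs.
From HB Require Import structures.
From mathcomp Require Import all_boot all_order all_algebra.
Import GRing.Theory.
Local Open Scope ring_scope.

Lemma teich_ab (V : zmodType) (p q r s t : V) :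
  (p - q) - (r - s) + (q - t) = (s - t) + (p - r).
Proof. apply/eqP; rewrite -subr_eq0 !opprD !opprK !addrA.
by rewrite (ACl ((1*9)*(5*2)*(10*3)*(4*7)*(8*6))) /= !subrr !add0r.
Qed.

Lemma abel1 (V : zmodType) (A B P1 Q1 R1 : V) :
  (A - P1 + B) - (- P1 - Q1 + R1) - (Q1 - R1) = A + B.
Proof.
apply/eqP; rewrite -subr_eq0 !opprD !opprK !addrA.
by rewrite (ACl ((1*9)*(4*2)*(3*10)*(5*7)*(8*6))) /= !subrr !add0r.
Qed.

Section Alt.
Variables (F : fieldType) (V : lmodType F) (mul : V -> V -> V) (one : V).
Hypothesis hA : unital_alternative_algebra mul one.
Local Notation as3 := (associator mul).

Lemma mulDl x y z : mul (x + y) z = mul x z + mul y z.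
Proof. case: hA => [[hl _] _ _ _]. by rewrite -[x in LHS]scale1r hl scale1r. Qed.
Lemma mulDr x y z : mul z (x + y) = mul z x + mul z y.
Proof. case: hA => [[_ hr] _ _ _]. by rewrite -[x in LHS]scale1r hr scale1r. Qed.
Lemma mul0l z : mul 0 z = 0.
Proof. by apply: (addrI (mul 0 z)); rewrite -mulDl !addr0. Qed.
Lemma mul0r z : mul z 0 = 0.
Proof. by apply: (addrI (mul z 0)); rewrite -mulDr !addr0. Qed.
Lemma mulNl x z : mul (- x) z = - mul x z.
Proof. by apply: (addrI (mul x z)); rewrite -mulDl !subrr mul0l. Qed.
Lemma mulNr x z : mul z (- x) = - mul z x.
Proof. by apply: (addrI (mul z x)); rewrite -mulDr !subrr mul0r. Qed.
Lemma mulBl x y z : mul (x - y) z = mul x z - mul y z.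
Proof. by rewrite mulDl mulNl. Qed.
Lemma mulBr x y z : mul z (x - y) = mul z x - mul z y.
Proof. by rewrite mulDr mulNr. Qed.

Lemma asD1 a b c d : as3 (a + b) c d = as3 a c d + as3 b c d.
Proof. by rewrite /associator !(mulDl, mulDr) opprD addrACA. Qed.
Lemma asD2 a b c d : as3 a (b + c) d = as3 a b d + as3 a c d.
Proof. by rewrite /associator !(mulDl, mulDr) opprD addrACA. Qed.
Lemma asD3 a b c d : as3 a b (c + d) = as3 a b c + as3 a b d.
Proof. by rewrite /associator !(mulDl, mulDr) opprD addrACA. Qed.

Lemma alt1 a c : as3 a a c = 0. Proof. by case: hA. Qed.
Lemma alt2 a c : as3 a c c = 0. Proof. by case: hA. Qed.

Lemma sw12 a b c : as3 a b c = - as3 b a c.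
Proof.
have := alt1 (a + b) c; rewrite asD1 !asD2 !alt1 add0r addr0 => /eqP.
by rewrite addr_eq0 => /eqP.
Qed.
Lemma sw23 a b c : as3 a b c = - as3 a c b.
Proof.
have := alt2 a (b + c); rewrite asD2 !asD3 !alt2 add0r addr0 => /eqP.
by rewrite addr_eq0 => /eqP.
Qed.
Lemma flex a b : as3 a b a = 0.
Proof. by rewrite sw23 alt1 oppr0. Qed.
Lemma cyc a b c : as3 a b c = as3 b c a.
Proof. by rewrite sw12 sw23 opprK. Qed.

Lemma teich a b c d :
  as3 (mul a b) c d - as3 a (mul b c) d + as3 a b (mul c d)
  = mul a (as3 b c d) + mul (as3 a b c) d.
Proof. rewrite /associator mulBr mulBl; exact: teich_ab. Qed.

Lemma moufang x b y : mul x (mul b (mul x y)) = mul (mul (mul x b) x) y.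
Proof.
have h1 := teich x b x y; have h2 := teich b x x y; have h3 := teich x x y b.
rewrite flex mul0l addr0 in h1.
rewrite alt1 alt2 mul0l mul0r addr0 sw12 in h2.
rewrite alt1 alt1 mul0l addr0 -(cyc b) -(cyc b x) -(cyc b x y) in h3.
have eM : mul (mul (mul x b) x) y - mul x (mul b (mul x y))
          = as3 (mul x b) x y + as3 x b (mul x y).
  by rewrite /associator addrA subrK.
have : as3 (mul x b) x y + as3 x b (mul x y) = 0.
  rewrite addr0 in h3.
  by rewrite -(@abel1 _ _ _ (as3 x (mul b x) y) (as3 b (mul x x) y) (as3 b x (mul x y))) h1 h2 h3 subr0 subrr.
rewrite -eM => /eqP; rewrite subr_eq0 => /eqP ->. by [].
Qed.

Lemma unitl z : mul one z = z. Proof. by case: hA => _ /(_ z) []. Qed.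
Lemma unitr z : mul z one = z. Proof. by case: hA => _ /(_ z) []. Qed.

Lemma lip u v (huv : mul u v = one) (hvu : mul v u = one) y :
  mul v (mul u y) = y.
Proof.
have inj z : mul u z = 0 -> z = 0.
  move=> hz; have := moufang u (mul v v) z.
  have -> : mul u (mul v v) = v.
    by have := alt2 u v; rewrite /associator huv unitl => /eqP; rewrite subr_eq0 => /eqP <-.
  by rewrite hvu unitl hz mul0r mul0r.
have := moufang u v y; rewrite huv unitl => /eqP; rewrite -subr_eq0 -mulBr.
by move=> /eqP /inj /eqP; rewrite subr_eq0 => /eqP.
Qed.

End Alt.
Arguments mulDl {F V mul one}.
Arguments mulDr {F V mul one}.
Arguments mul0l {F V mul one}.
Arguments mul0r {F V mul one}.
Arguments mulNl {F V mul one}.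
Arguments mulNr {F V mul one}.
Arguments mulBl {F V mul one}.
Arguments mulBr {F V mul one}.
Arguments asD1 {F V mul one}.
Arguments asD2 {F V mul one}.
Arguments asD3 {F V mul one}.
Arguments alt1 {F V mul one}.
Arguments alt2 {F V mul one}.
Arguments sw12 {F V mul one}.
Arguments sw23 {F V mul one}.
Arguments flex {F V mul one}.
Arguments cyc {F V mul one}.
Arguments teich {F V mul one}.
Arguments moufang {F V mul one}.
Arguments unitl {F V mul one}.
Arguments unitr {F V mul one}.
Arguments lip {F V mul one}.

Lemma opp_alt (F : fieldType) (V : lmodType F) (mul : V -> V -> V) (one : V) :
  unital_alternative_algebra mul one ->
  unital_alternative_algebra (fun a b => mul b a) one.
Proof.
move=> hA; case: (hA) => [[hl hr] hu _ _]; split.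
- by split=> a x y z; [apply: hr | apply: hl].
- by move=> x; case: (hu x).
- move=> x y; rewrite /associator /=.
  by rewrite -opprB; have := alt2 hA y x; rewrite /associator => ->; rewrite oppr0.
- move=> x y; rewrite /associator /=.
  by rewrite -opprB; have := alt1 hA y x; rewrite /associator => ->; rewrite oppr0.
Qed.

Lemma rip (F : fieldType) (V : lmodType F) (mul : V -> V -> V) (one : V)
  (hA : unital_alternative_algebra mul one) u v
  (huv : mul u v = one) (hvu : mul v u = one) y : mul (mul y u) v = y.
Proof. by have := @lip _ _ (fun a b => mul b a) one (@opp_alt _ _ _ _ hA) u v hvu huv y. Qed.

Theorem lemma1p2 (F : fieldType) (V : lmodType F) (mul : V -> V -> V) (one : V)
    (d : V -> V)
    (hA : unital_alternative_algebra mul one)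
    (hd : derivation_with_invertible_values mul one d)
    (x : V) (hx : d x = 0) :
  x = 0 \/ invertible mul one x.
Proof.
case: hd => [[dlin dleib] [y hy] hinv].
have dl z : d (mul x z) = mul x (d z) by rewrite dleib hx (mul0l hA) add0r.
have dr z : d (mul z x) = mul (d z) x by rewrite dleib hx (mul0r hA) addr0.
case: (hinv y) => [[v [huv hvu]]|//].
case: (hinv (mul x y)) => [[w' [hw1 hw2]]|].
  case: (hinv (mul (mul x y) x)) => [[q' [hq1 hq2]]|].
    rewrite dr dl in hq1 hq2; right.
    set q := mul (mul x (d y)) x in hq1 hq2.
    have mf z : mul x (mul (d y) (mul x z)) = mul q z by rewrite (moufang hA).
    have inj z : mul x z = 0 -> z = 0.
      move=> hz; rewrite -(lip hA _ _ hq1 hq2 z) -mf hz !(mul0r hA) //.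
    exists (mul (d y) (mul x q')); split; first by rewrite mf.
    have hf := flex hA x (mul (d y) (mul x q')).
    move: hf; rewrite /associator mf hq1 (unitl hA) => /eqP.
    rewrite subr_eq0 => /eqP hf.
    apply/eqP; rewrite -subr_eq0; apply/eqP; apply: inj.
    by rewrite (mulBr hA) (unitr hA) -hf subrr.
  rewrite dr dl => hq; left.
  rewrite dl in hw1 hw2.
  by rewrite -(lip hA _ _ hw1 hw2 x) hq (mul0r hA).
rewrite dl => hw; left.
by rewrite -(@rip _ _ _ _ hA _ _ huv hvu x) hw (mul0l hA).
Qed.
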